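(* For every normal PO-dilator $W$ and every partial order $X$, the Kruskal fixed point $(\mathcal T W(X),\iota_X,\kappa_X)$ of $W$ over $X$ is initial.
   Context: A quasi embedding between partial orders $X,Y$ is a function $f$ with $f(x)\leq_Y f(y)\Rightarrow x\leq_X y$; an embedding also satisfies the converse. $\mathrm{PO}$ is the category of partial orders and quasi embeddings. $[X]^{<\omega}$ denotes the finite subsets of $X$, with $[f]^{<\omega}(a)=\{f(x)\mid x\in a\}$; subsets of partial orders are regarded as suborders and $\iota_a$ denotes an inclusion map. A PO-dilator is a functor $W:\mathrm{PO}\to\mathrm{PO}$ mapping embeddings to embeddings, with a natural transformation $\operatorname{supp}^W:W\Rightarrow[\cdot]^{<\omega}$ such that for every embedding $f:X\to Y$, $\operatorname{rng}(W(f))=\{\sigma\in W(Y)\mid\operatorname{supp}^W_Y(\sigma)\subseteq\operatorname{rng}(f)\}$. For finite $a,b\subseteq X$, $a\leq^{\mathrm{fin}}_X b$ iff every $x\in a$ has some $y\in b$ with $x\leq_X y$ ($z\leq^{\mathrm{fin}}_X b$ means $\{z\}\leq^{\mathrm{fin}}_X b$). $W$ is normal if $\sigma\leq_{W(X)}\tau$ implies $\operatorname{supp}^W_X(\sigma)\leq^{\mathrm{fin}}_X\operatorname{supp}^W_X(\tau)$. For $\sigma\in W(X)$, $\sigma=_{\mathrm{NF}}W(\iota_a)(\sigma_0)$ means $a\in[X]^{<\omega}$, $\sigma_0\in W(a)$, $\sigma=W(\iota_a)(\sigma_0)$ and $\operatorname{supp}^W_a(\sigma_0)=a$; each $\sigma$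 has exactly one such representation. For a normal PO-dilator $W$ and partial order $X$, the set $\mathcal T W(X)$ and relation $\leq_{\mathcal T W(X)}$ are defined by simultaneous recursion. Terms: (i) $\overline x$ for each $x\in X$; (ii) for each finite $a\subseteq\mathcal T W(X)$ on which the restriction of $\leq_{\mathcal T W(X)}$ is a partial order, and each $\sigma\in W(a)$ with $\operatorname{supp}^W_a(\sigma)=a$, a term $\circ(a,\sigma)$. Relation: $s\leq_{\mathcal T W(X)}t$ iff (i') $s=\overline x$, $t=\overline y$, $x\leq_X y$; or (ii') $t=\circ(b,\tau)$ and $s\leq_{\mathcal T W(X)}t'$ for some $t'\in b$; or (iii') $s=\circ(a,\sigma)$, $t=\circ(b,\tau)$, the restriction of $\leq_{\mathcal T W(X)}$ to $a\cup b$ is a partial order, and $W(\iota_a)(\sigma)\leq_{W(a\cup b)}W(\iota_b)(\tau)$ for the inclusions into $a\cup b$. (The recursion is along the length $l(\overline x)=0$, $l(\circ(a,\sigma))=1+\sum_{r\in a}2\,l(r)$.) $\leq_{\mathcal T W(X)}$ is a partial order. Define $\iota_X(x)=\overline x$ and $\kappa_X:W(\mathcal T W(X))\to\mathcal T W(X)$, $\kappa_X(\sigma)=\circ(a,\sigma_0)$ for $\sigma=_{\mathrm{NF}}W(\iota_a)(\sigma_0)$. A Kruskal fixed point of $W$ over $X$ is a partial order $Z$ with functions $\iota:X\to Z$, $\kappa:W(Z)\to Z$ such that $\operatorname{rng}(\iota)\cap\operatorname{rng}(\kappa)=\emptyset$ and: $\iota(x)\leq_Z\iota(y)\Rightarrow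 x\leq_X y$; $\iota(x)\leq_Z\kappa(\tau)$ iff $\iota(x)\leq^{\mathrm{fin}}_Z\operatorname{supp}^W_Z(\tau)$; $\kappa(\sigma)\not\leq_Z\iota(y)$; $\kappa(\sigma)\leq_Z\kappa(\tau)$ iff ($\sigma\leq_{W(Z)}\tau$ or $\kappa(\sigma)\leq^{\mathrm{fin}}_Z\operatorname{supp}^W_Z(\tau)$). It is initial if for every Kruskal fixed point $(Z',\iota',\kappa')$ of $W$ over $X$ there is a unique quasi embedding $f:Z\to Z'$ with $f\circ\iota=\iota'$ and $f\circ\kappa=\kappa'\circ W(f)$. *)

(* Defs.v *)
From Stdlib Require Import List FunctionalExtensionality PropExtensionality ProofIrrelevance.
From mathcomp Require Import ssreflect ssrfun ssrbool eqtype ssrnat seq fintype bigop.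

Set Implicit Arguments.
Unset Strict Implicit.
Unset Printing Implicit Defensive.

Record PO := mkPO {
  car :> Type;
  ple : car -> car -> Prop;
  ple_refl : forall x, ple x x;
  ple_trans : forall x y z, ple x y -> ple y z -> ple x z;
  ple_antisym : forall x y, ple x y -> ple y x -> x = y }.
Arguments ple {p} _ _.

Definition quasi_emb (X Y : PO) (f : X -> Y) : Prop :=
  forall x y, ple (f x) (f y) -> ple x y.

Definition embedding (X Y : PO) (f : X -> Y) : Prop :=
  forall x y, ple (f x) (f y) <-> ple x y.

(* morphisms of the category PO: quasi embeddings *)
Record qemb (X Y : PO) := QEmb { qfun :> X -> Y; qfun_quasi : quasi_emb qfun }.

Definition qid (X : PO) : qemb X X := @QEmb X X (fun x => x) (fun x y h => h).

Definition qcomp (X Y Z : PO) (g : qemb Y Z) (f : qemb X Y) : qemb X Z :=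
  @QEmb X Z (fun x => g (f x))
    (fun x y h => @qfun_quasi X Y f x y (@qfun_quasi Y Z g (f x) (f y) h)).

Definition finite_set (T : Type) (a : T -> Prop) : Prop :=
  exists l : list T, forall x, a x -> List.In x l.

Definition fin_le (X : PO) (a b : X -> Prop) : Prop :=
  forall x, a x -> exists y, b y /\ ple x y.

Record PO_dilator := {
  Wob :> PO -> PO;
  Wmor : forall X Y : PO, qemb X Y -> qemb (Wob X) (Wob Y);
  Wmor_id : forall (X : PO) (s : Wob X), Wmor (qid X) s = s;
  Wmor_comp : forall (X Y Z : PO) (g : qemb Y Z) (f : qemb X Y) (s : Wob X),
      Wmor (qcomp g f) s = Wmor g (Wmor f s);
  Wmor_emb : forall (X Y : PO) (f : qemb X Y), embedding f -> embedding (Wmor f);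
  supp : forall X : PO, Wob X -> X -> Prop;
  supp_finite : forall (X : PO) (s : Wob X), finite_set (supp s);
  supp_nat : forall (X Y : PO) (f : qemb X Y) (s : Wob X) (y : Y),
      supp (Wmor f s) y <-> exists x, supp s x /\ f x = y;
  supp_rng : forall (X Y : PO) (f : qemb X Y), embedding f ->
      forall t : Wob Y, (exists s, Wmor f s = t) <-> (forall y, supp t y -> exists x, f x = y)
}.
Arguments Wmor p {X Y} _.
Arguments supp p {X} _ _.

Definition normal (W : PO_dilator) : Prop :=
  forall (X : PO) (s t : W X), ple s t -> fin_le (supp W s) (supp W t).

Definition KruskalFP (W : PO_dilator) (X Z : PO) (io : X -> Z) (ka : W Z -> Z) : Prop :=
  (forall x s, io x <> ka s) /\
  (forall x y, ple (io x) (io y) -> ple x y) /\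
  (forall x t, ple (io x) (ka t) <-> fin_le (fun z => z = io x) (supp W t)) /\
  (forall s y, ~ ple (ka s) (io y)) /\
  (forall s t, ple (ka s) (ka t) <->
               (ple s t \/ fin_le (fun z => z = ka s) (supp W t))).

Arguments KruskalFP W {X Z} io ka.

Definition KruskalFP_initial (W : PO_dilator) (X Z : PO) (io : X -> Z) (ka : W Z -> Z) : Prop :=
  forall (Z' : PO) (io' : X -> Z') (ka' : W Z' -> Z'), KruskalFP W io' ka' ->
    exists f : qemb Z Z',
      ((forall x, f (io x) = io' x) /\ (forall s, f (ka s) = ka' (Wmor W f s))) /\
      (forall g : qemb Z Z',
          (forall x, g (io x) = io' x) -> (forall s, g (ka s) = ka' (Wmor W g s)) ->
          forall z, g z = f z).

Arguments KruskalFP_initial W {X Z} io ka.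

Record finPO (n : nat) := {
  frel : 'I_n -> 'I_n -> Prop;
  frel_refl : forall i, frel i i;
  frel_trans : forall i j k, frel i j -> frel j k -> frel i k;
  frel_antisym : forall i j, frel i j -> frel j i -> i = j }.

Definition PO_of_fin (n : nat) (P : finPO n) : PO :=
  @mkPO 'I_n (frel P) (@frel_refl n P) (@frel_trans n P) (@frel_antisym n P).

Section Quot.
Variables (A : Type) (R : A -> A -> Prop).
Hypothesis Rr : forall a, R a a.
Hypothesis Rt : forall a b c, R a b -> R b c -> R a c.

Definition qclass (a : A) : A -> Prop := fun b => R a b /\ R b a.
Definition qcar : Type := {S : A -> Prop | exists a, S = qclass a}.
Definition qle (S T : qcar) : Prop :=
  exists a b, proj1_sig S a /\ proj1_sig T b /\ R a b.

Lemma qle_refl (S : qcar) : qle S S.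
Proof.
case: S => S HS; case: (HS) => a Ha; exists a, a; rewrite /= Ha /qclass.
by do !split; apply: Rr.
Qed.

Lemma qle_trans (S T U : qcar) : qle S T -> qle T U -> qle S U.
Proof.
case: S => S HS; case: T => T HT; case: U => U HU; rewrite /qle /=.
case: (HT) => t Ht'; rewrite Ht' /qclass.
move=> [a [b [Ha [[Hb1 Hb2] Hab]]]] [b' [c [[Hb'1 Hb'2] [Hc Hbc]]]].
exists a, c; do !split => //.
apply: (Rt Hab); apply: (Rt Hb2); apply: (Rt Hb'1); exact: Hbc.
Qed.

Lemma qle_antisym (S T : qcar) : qle S T -> qle T S -> S = T.
Proof.
case: S => S [s HS]; case: T => T [t HT] /=; subst S T.
move=> [a [b [[Hsa Has] [[Htb Hbt] Hab]]]] [b' [a' [[Htb' Hbt'] [[Hsa' Has'] Hba]]]].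
have st : R s t by apply: (Rt Hsa); apply: (Rt Hab).
have ts : R t s by apply: (Rt Htb'); apply: (Rt Hba).
have E : qclass s = qclass t.
  apply: functional_extensionality => x; apply: propositional_extensionality.
  rewrite /qclass; split=> [[h1 h2]|[h1 h2]]; split.
  - exact: Rt ts h1.
  - exact: Rt h2 st.
  - exact: Rt st h1.
  - exact: Rt h2 ts.
apply: eq_sig_hprop => /=; last exact: E.
by move=> ? ? ?; apply: proof_irrelevance.
Qed.

Definition quotPO : PO := @mkPO qcar qle qle_refl qle_trans qle_antisym.
End Quot.

(*   Terms circ(a, sigma) are encoded by raw trees                     *)
(*   rnode n P sigma c, where c : 'I_n -> raw enumerates the set a,    *)
(*   P is the (finite) partial order on the indices induced from a and *)
(*   sigma : W(P) corresponds to sigma_0 in W(a).  Raw trees that      *)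
(*   differ only by re-indexing are identified by a quotient.          *)

Section TW.
Variables (W : PO_dilator) (X : PO).

Inductive raw : Type :=
| rleaf : X -> raw
| rnode : forall (n : nat) (P : finPO n), W (PO_of_fin P) -> ('I_n -> raw) -> raw.

Fixpoint rlen (r : raw) : nat :=
  match r with
  | rleaf _ => 0
  | rnode n P s c => (\sum_(i < n) (rlen (c i)).*2).+1
  end.

Definition rval (n m : nat) (c : 'I_n -> raw) (d : 'I_m -> raw) (u : 'I_n + 'I_m) : raw :=
  match u with inl i => c i | inr j => d j end.

Fixpoint rleq_f (k : nat) (s t : raw) {struct k} : Prop :=
  match k with
  | 0 => False
  | k'.+1 =>
    match s, t with
    | rleaf x, rleaf y => ple x y
    | rleaf _, rnode m Q tau d => exists j, rleq_f k' s (d j)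
    | rnode _ _ _ _, rleaf _ => False
    | rnode n P sig c, rnode m Q tau d =>
        (exists j, rleq_f k' s (d j))
        \/
        (let R := fun u v => rleq_f k' (rval c d u) (rval c d v) in
         exists (Hr : forall u, R u u)
                (Ht : forall u v w, R u v -> R v w -> R u w)
                (fa : qemb (PO_of_fin P) (quotPO Hr Ht))
                (fb : qemb (PO_of_fin Q) (quotPO Hr Ht)),
           (forall i, proj1_sig (fa i) = qclass R (inl i)) /\
           (forall j, proj1_sig (fb j) = qclass R (inr j)) /\
           ple (Wmor W fa sig) (Wmor W fb tau))
    end
  end.

Definition rleq (s t : raw) : Prop := rleq_f (rlen s + rlen t).+1 s t.

Fixpoint rwf (r : raw) : Prop :=
  match r with
  | rleaf _ => True
  | rnode n P s c =>
      (forall i, rwf (c i)) /\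
      (forall i j, frel P i j <-> rleq (c i) (c j)) /\
      (forall i, supp W s i)
  end.

Definition TWA : Type := {r : raw | rwf r}.
Definition TWR (a b : TWA) : Prop := rleq (proj1_sig a) (proj1_sig b).

Definition TWcar : Type := qcar TWR.

Definition TW (Hr : forall a, TWR a a)
              (Ht : forall a b c, TWR a b -> TWR b c -> TWR a c) : PO :=
  quotPO Hr Ht.

Definition cls (r : raw) : TWA -> Prop := fun b => rleq r (proj1_sig b) /\ rleq (proj1_sig b) r.

Definition iotaTW (x : X) : TWcar :=
  exist _ (cls (rleaf x)) (ex_intro _ (exist rwf (rleaf x) I) erefl).

(* kappa_X(sigma) = circ(a, sigma_0) where sigma =_NF W(iota_a)(sigma_0) *)
Definition kappaTW_spec (Hr : forall a, TWR a a)
    (Ht : forall a b c, TWR a b -> TWR b c -> TWR a c)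
    (s : W (TW Hr Ht)) (S : TWcar) : Prop :=
  exists (n : nat) (P : finPO n) (s0 : W (PO_of_fin P)) (c : 'I_n -> raw),
    rwf (rnode s0 c) /\
    exists e : qemb (PO_of_fin P) (TW Hr Ht),
      (forall i, proj1_sig (e i) = cls (c i)) /\
      Wmor W e s0 = s /\
      proj1_sig S = cls (rnode s0 c).

End TW.

(* Main.v *)
From Stdlib Require Import FunctionalExtensionality PropExtensionality ProofIrrelevance Classical ClassicalEpsilon.
From mathcomp Require Import ssreflect ssrfun ssrbool eqtype ssrnat seq fintype bigop.
From mathcomp Require Import zify.
Require Import Defs.

Set Implicit Arguments.
Unset Strict Implicit.
Unset Printing Implicit Defensive.


Lemma qemb_eq (X Y : PO) (f g : qemb X Y) : (forall x, f x = g x) -> f = g.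
Proof.
case: f g => f Hf [g Hg] /= E.
have E' : f = g by apply: functional_extensionality.
subst g. by rewrite (proof_irrelevance _ Hf Hg).
Qed.

Lemma emb_inj (X Y : PO) (f : X -> Y) : embedding f -> forall x y, f x = f y -> x = y.
Proof.
move=> H x y E; apply: ple_antisym; apply/H; rewrite E; exact: ple_refl.
Qed.

Section QuotLemmas.
Variables (A : Type) (R : A -> A -> Prop).

Definition qcl (a : A) : qcar R := exist _ (qclass R a) (ex_intro _ a erefl).

Lemma qcar_eq (S T : qcar R) : proj1_sig S = proj1_sig T -> S = T.
Proof. case: S T => S HS [T HT] /= E; subst T; by rewrite (proof_irrelevance _ HS HT). Qed.

Definition rep (S : qcar R) : A :=
  proj1_sig (constructive_indefinite_description _ (proj2_sig S)).

Lemma rep_spec S : S = qcl (rep S).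
Proof.
apply: qcar_eq; rewrite /rep /=.
by case: (constructive_indefinite_description _ _) => a /=.
Qed.

Hypothesis Rr : forall a, R a a.
Hypothesis Rt : forall a b c, R a b -> R b c -> R a c.

Lemma qle_qcl a b : @qle A R (qcl a) (qcl b) <-> R a b.
Proof.
rewrite /qle /=; split.
- move=> [a' [b' [[H1 H2] [[H3 H4] H5]]]]; exact: Rt H1 (Rt H5 H4).
- move=> H; exists a, b; rewrite /qclass; do !split => //; exact: Rr.
Qed.

Lemma qcl_eq a b : qcl a = qcl b <-> R a b /\ R b a.
Proof.
split.
- move=> E; have : proj1_sig (qcl b) b by rewrite /= /qclass; split; apply: Rr.
  by rewrite -E /= /qclass.
- move=> [H1 H2]; apply: qcar_eq => /=; apply: functional_extensionality => x.
  apply: propositional_extensionality; rewrite /qclass.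
  split=> [[h1 h2]|[h1 h2]]; split.
  + exact: Rt H2 h1.
  + exact: Rt h2 H1.
  + exact: Rt H1 h1.
  + exact: Rt h2 H2.
Qed.

Lemma in_class_eq (S : qcar R) a : proj1_sig S = qclass R a -> S = qcl a.
Proof. by move=> E; apply: qcar_eq. Qed.

Variables (Y : PO) (phi : A -> Y).
Hypothesis phi_resp : forall a b, R a b -> R b a -> phi a = phi b.

Definition liftf (S : qcar R) : Y := phi (rep S).

Lemma liftf_qcl a : liftf (qcl a) = phi a.
Proof.
rewrite /liftf; have E := rep_spec (qcl a).
have [h1 h2] := proj1 (qcl_eq _ _) E.
by apply: phi_resp.
Qed.

Lemma liftf_quasi : (forall a b, ple (phi a) (phi b) -> R a b) ->
  @quasi_emb (quotPO Rr Rt) Y liftf.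
Proof.
move=> Hq S T H; rewrite (rep_spec S) (rep_spec T); apply/qle_qcl; exact: Hq.
Qed.

Lemma liftf_emb : (forall a b, R a b <-> ple (phi a) (phi b)) ->
  @embedding (quotPO Rr Rt) Y liftf.
Proof.
move=> Hq S T; rewrite [in X in _ <-> X](rep_spec S) [in X in _ <-> X](rep_spec T).
rewrite /= qle_qcl Hq; done.
Qed.

End QuotLemmas.

Lemma Wcomp (W : PO_dilator) (X Y Z : PO) (g : qemb Y Z) (f : qemb X Y) (e : qemb X Z)
  (s : W X) : (forall x, g (f x) = e x) -> Wmor W g (Wmor W f s) = Wmor W e s.
Proof. move=> H; rewrite -Wmor_comp; congr (Wmor W _ s); apply: qemb_eq => x /=; exact: H. Qed.

Lemma fin_enum (T : Type) (A : T -> Prop) : finite_set A ->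
  exists n (g : 'I_n -> T), injective g /\ (forall x, A x <-> exists i, g i = x).
Proof.
move=> [l]; elim: l A => [|y l IH] A Hl.
- have g : 'I_0 -> T by case=> ? //.
  exists 0, g; split; first by case.
  move=> x; split; first by move/Hl.
  by case=> [[]].
- have Hl' : forall x, (A x /\ x <> y) -> List.In x l.
    move=> x [/Hl [->|//] //].
  have [n [g [gi gA]]] := IH _ Hl'.
  case: (classic (A y)) => Ay.
  + pose g' (i : 'I_n.+1) := match unlift ord0 i with Some j => g j | None => y end.
    have g'l : forall j, g' (lift ord0 j) = g j by move=> j; rewrite /g' liftK.
    have g'0 : g' ord0 = y by rewrite /g' unlift_none.
    have gy : forall j, g j <> y by move=> j; have [_ ?] := proj2 (gA (g j)) (ex_intro _ j erefl).
    exists n.+1, g'; split.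
    * move=> i1 i2; case: (unliftP ord0 i1) => [j1 ->|->]; case: (unliftP ord0 i2) => [j2 ->|->];
        rewrite ?g'l ?g'0.
      -- by move/gi ->.
      -- by move/gy.
      -- by move=> E; case: (gy j2); rewrite E.
      -- done.
    * move=> x; split.
      -- move=> Ax; case: (classic (x = y)) => [->|ne]; first by exists ord0.
         have [j Hj] := proj1 (gA x) (conj Ax ne); exists (lift ord0 j); by rewrite g'l.
      -- move=> [i <-]; case: (unliftP ord0 i) => [j ->|->]; rewrite ?g'l ?g'0 //.
         by have [] := proj2 (gA (g j)) (ex_intro _ j erefl).
  + exists n, g; split => // x; split.
    * move=> Ax; apply/gA; split => // E; by subst.
    * by move/gA => [].
Qed.



Section Main.
Variables (W : PO_dilator) (X : PO).

Local Notation raw := (raw W X).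

Definition iii n m (P : finPO n) (Q : finPO m) (sig : W (PO_of_fin P)) (tau : W (PO_of_fin Q))
  (R : 'I_n + 'I_m -> 'I_n + 'I_m -> Prop) : Prop :=
  exists (Hr : forall u, R u u) (Ht : forall u v w, R u v -> R v w -> R u w)
         (fa : qemb (PO_of_fin P) (quotPO Hr Ht)) (fb : qemb (PO_of_fin Q) (quotPO Hr Ht)),
    (forall i, proj1_sig (fa i) = qclass R (inl i)) /\
    (forall j, proj1_sig (fb j) = qclass R (inr j)) /\
    ple (Wmor W fa sig) (Wmor W fb tau).

Lemma rleq_f_nn k n m (P : finPO n) (Q : finPO m) (sig : W (PO_of_fin P)) (tau : W (PO_of_fin Q)) (c : 'I_n -> raw) (d : 'I_m -> raw) :
  rleq_f k.+1 (rnode sig c) (rnode tau d) =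
  ((exists j, rleq_f k (rnode sig c) (d j)) \/
   iii sig tau (fun u v => rleq_f k (rval c d u) (rval c d v))).
Proof. reflexivity. Qed.

Lemma rleq_f_ln k x m (Q : finPO m) (tau : W (PO_of_fin Q)) (d : 'I_m -> raw) :
  rleq_f k.+1 (rleaf W x) (rnode tau d) = exists j, rleq_f k (rleaf W x) (d j).
Proof. reflexivity. Qed.

Lemma rlen_child n (P : finPO n) (sig : W (PO_of_fin P)) (c : 'I_n -> raw) i :
  rlen (c i) + rlen (c i) < rlen (rnode sig c).
Proof. rewrite /= ltnS (bigD1 i) //= -addnn; exact: leq_addr. Qed.

Lemma rval_len n m (P : finPO n) (Q : finPO m) (sig : W (PO_of_fin P)) (tau : W (PO_of_fin Q)) (c : 'I_n -> raw) (d : 'I_m -> raw) u v :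
  rlen (rval c d u) + rlen (rval c d v) < rlen (rnode sig c) + rlen (rnode tau d).
Proof.
move: (rlen_child sig c) (rlen_child tau d) => H1 H2.
case: u => [i|i]; case: v => [j|j] /=;
  [move: (H1 i) (H1 j) | move: (H1 i) (H2 j) | move: (H2 i) (H1 j) | move: (H2 i) (H2 j)];
  rewrite /=; lia.
Qed.

Lemma rleq_f_stab k k' (s t : raw) : rlen s + rlen t < k -> rlen s + rlen t < k' ->
  rleq_f k s t = rleq_f k' s t.
Proof.
elim: k k' s t => [|k IH] [|k'] s t // H1 H2.
case: s H1 H2 => [x|n P sig c]; case: t => [y|m Q tau d] H1 H2 //.
- rewrite !rleq_f_ln; apply: propositional_extensionality.
  split=> [[j Hj]|[j Hj]]; exists j; [rewrite -(IH k') | rewrite (IH k')] => //;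
  have := rlen_child tau d j; move: H1 H2; rewrite /=; lia.
- rewrite !rleq_f_nn.
  have E : (fun u v => rleq_f k (rval c d u) (rval c d v)) =
           (fun u v => rleq_f k' (rval c d u) (rval c d v)).
    apply: functional_extensionality => u; apply: functional_extensionality => v.
    apply: IH; have := rval_len sig tau c d u v; lia.
  rewrite E; congr (_ \/ _); apply: propositional_extensionality.
  split=> [[j Hj]|[j Hj]]; exists j; [rewrite -(IH k') | rewrite (IH k')] => //;
  have := rlen_child tau d j; move: H1 H2; rewrite /=; lia.
Qed.

Lemma rleq_stab k (s t : raw) : rlen s + rlen t < k -> rleq_f k s t = rleq s t.
Proof. move=> H; apply: rleq_f_stab => //. Qed.

Definition Rcd n m (c : 'I_n -> raw) (d : 'I_m -> raw) u v := rleq (rval c d u) (rval c d v).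

Lemma rleq_nn n m (P : finPO n) (Q : finPO m) (sig : W (PO_of_fin P)) (tau : W (PO_of_fin Q)) (c : 'I_n -> raw) (d : 'I_m -> raw) :
  rleq (rnode sig c) (rnode tau d) <->
  (exists j, rleq (rnode sig c) (d j)) \/ iii sig tau (Rcd c d).
Proof.
rewrite {1}/rleq rleq_f_nn.
have E : (fun u v => rleq_f (rlen (rnode sig c) + rlen (rnode tau d)) (rval c d u) (rval c d v))
         = Rcd c d.
  apply: functional_extensionality => u; apply: functional_extensionality => v.
  by apply: rleq_stab; apply: rval_len.
rewrite E; split=> [[[j Hj]|H]|[[j Hj]|H]]; try (by right); left; exists j.
- by rewrite -(@rleq_stab (rlen (rnode sig c) + rlen (rnode tau d))) //; have := rlen_child tau d j; lia.
- by rewrite (@rleq_stab (rlen (rnode sig c) + rlen (rnode tau d))) //; have := rlen_child tau d j; lia.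
Qed.

Lemma rleq_ln (x : X) m (Q : finPO m) (tau : W (PO_of_fin Q)) (d : 'I_m -> raw) :
  rleq (rleaf W x) (rnode tau d) <-> exists j, rleq (rleaf W x) (d j).
Proof.
rewrite {1}/rleq rleq_f_ln.
split=> [[j Hj]|[j Hj]]; exists j.
- by rewrite -(@rleq_stab (rlen (rleaf W x) + rlen (rnode tau d))) //; have := rlen_child tau d j; rewrite /=; lia.
- by rewrite (@rleq_stab (rlen (rleaf W x) + rlen (rnode tau d))) //; have := rlen_child tau d j; rewrite /=; lia.
Qed.

Lemma rleq_nl n (P : finPO n) (sig : W (PO_of_fin P)) (c : 'I_n -> raw) (y : X) : ~ rleq (rnode sig c) (rleaf W y).
Proof. by []. Qed.

Lemma rleq_ll (x y : X) : rleq (rleaf W x) (rleaf W y) <-> ple x y.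
Proof. by []. Qed.

Lemma le_child (s : raw) m (Q : finPO m) (tau : W (PO_of_fin Q)) (d : 'I_m -> raw) j :
  rleq s (d j) -> rleq s (rnode tau d).
Proof.
case: s => [x|n P sig c] H.
- by apply/rleq_ln; exists j.
- by apply/rleq_nn; left; exists j.
Qed.

End Main.



Section Canon.
Variables (n : nat) (P : finPO n) (A : Type) (R : A -> A -> Prop).
Hypotheses (Rr : forall a, R a a) (Rt : forall a b c, R a b -> R b c -> R a c).
Variable (g : 'I_n -> A).
Hypothesis Hg : forall i j, R (g i) (g j) -> frel P i j.

Definition cmapf : qemb (PO_of_fin P) (quotPO Rr Rt) :=
  @QEmb (PO_of_fin P) (quotPO Rr Rt) (fun i => qcl R (g i))
        (fun i j H => Hg (proj1 (qle_qcl Rr Rt _ _) H)).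
End Canon.

Section Gen.
Variable W : PO_dilator.

Lemma iii_canon n m (P : finPO n) (Q : finPO m) (sig : W (PO_of_fin P)) (tau : W (PO_of_fin Q)) R :
  iii sig tau R <->
  exists Rr Rt HP HQ, ple (Wmor W (@cmapf n P _ R Rr Rt (fun i => inl i) HP) sig)
                          (Wmor W (@cmapf m Q _ R Rr Rt (fun j => inr j) HQ) tau).
Proof.
split.
- move=> [Rr [Rt [fa [fb [Ha [Hb H]]]]]].
  have Ea : forall i, fa i = qcl R (inl i) by move=> i; apply: in_class_eq.
  have Eb : forall j, fb j = qcl R (inr j) by move=> j; apply: in_class_eq.
  have HP : forall i j, R (inl i) (inl j) -> frel P i j.
    move=> i j Hij; have := @qfun_quasi _ _ fa i j; apply; rewrite /= !Ea; exact/qle_qcl.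
  have HQ : forall i j, R (inr i) (inr j) -> frel Q i j.
    move=> i j Hij; have := @qfun_quasi _ _ fb i j; apply; rewrite /= !Eb; exact/qle_qcl.
  exists Rr, Rt, HP, HQ.
  have -> : cmapf Rr Rt HP = fa by apply: qemb_eq => i; rewrite Ea.
  have -> : cmapf Rr Rt HQ = fb by apply: qemb_eq => i; rewrite Eb.
  done.
- move=> [Rr [Rt [HP [HQ H]]]].
  by exists Rr, Rt, (cmapf Rr Rt HP), (cmapf Rr Rt HQ).
Qed.

Lemma A_gen (Y : PO) n m (P : finPO n) (Q : finPO m) (sig : W (PO_of_fin P)) (tau : W (PO_of_fin Q))
  R (phi : 'I_n + 'I_m -> Y) (Hphi : forall u v, R u v <-> ple (phi u) (phi v))
  (e1 : qemb (PO_of_fin P) Y) (e2 : qemb (PO_of_fin Q) Y)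
  (He1 : forall i, e1 i = phi (inl i)) (He2 : forall j, e2 j = phi (inr j)) :
  iii sig tau R <-> ple (Wmor W e1 sig) (Wmor W e2 tau).
Proof.
have Rr : forall u, R u u by move=> u; apply/Hphi; apply: ple_refl.
have Rt : forall u v w, R u v -> R v w -> R u w.
  move=> u v w /Hphi H1 /Hphi H2; apply/Hphi; exact: ple_trans H1 H2.
have resp : forall a b, R a b -> R b a -> phi a = phi b.
  by move=> a b /Hphi H1 /Hphi H2; apply: ple_antisym.
pose L := @QEmb (quotPO Rr Rt) Y (liftf phi) (liftf_quasi (fun a b H => proj2 (Hphi a b) H)).
have Lemb : embedding L := liftf_emb Hphi.
have HP : forall i j, R (inl i) (inl j) -> frel P i j.
  by move=> i j /Hphi; rewrite -!He1; apply: qfun_quasi.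
have HQ : forall i j, R (inr i) (inr j) -> frel Q i j.
  by move=> i j /Hphi; rewrite -!He2; apply: qfun_quasi.
have E1 : Wmor W L (Wmor W (@cmapf n P _ R Rr Rt (fun i => inl i) HP) sig) = Wmor W e1 sig.
  by apply: Wcomp => i; rewrite /= (liftf_qcl Rr Rt resp) He1.
have E2 : Wmor W L (Wmor W (@cmapf m Q _ R Rr Rt (fun i => inr i) HQ) tau) = Wmor W e2 tau.
  by apply: Wcomp => i; rewrite /= (liftf_qcl Rr Rt resp) He2.
split.
- move/iii_canon => [Rr' [Rt' [HP' [HQ' H]]]].
  have ER : Rr' = Rr := proof_irrelevance _ _ _. subst Rr'.
  have ET : Rt' = Rt := proof_irrelevance _ _ _. subst Rt'.
  have EP : HP' = HP := proof_irrelevance _ _ _. subst HP'.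
  have EQ : HQ' = HQ := proof_irrelevance _ _ _. subst HQ'.
  rewrite -E1 -E2; exact/(Wmor_emb Lemb).
- move=> H; apply/iii_canon; exists Rr, Rt, HP, HQ; apply/(Wmor_emb Lemb); by rewrite E1 E2.
Qed.

Lemma B_gen (Z : PO) n m (P : finPO n) (Q : finPO m) (sig : W (PO_of_fin P)) (tau : W (PO_of_fin Q))
  R (Rr : forall u, R u u) (Rt : forall u v w, R u v -> R v w -> R u w)
  (phi : 'I_n + 'I_m -> Z) (resp : forall a b, R a b -> R b a -> phi a = phi b)
  (Hq : forall a b, ple (phi a) (phi b) -> R a b)
  (HP : forall i j, R (inl i) (inl j) -> frel P i j) (HQ : forall i j, R (inr i) (inr j) -> frel Q i j)
  (h : qemb (PO_of_fin P) Z) (k : qemb (PO_of_fin Q) Z)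
  (Hh : forall i, h i = phi (inl i)) (Hk : forall j, k j = phi (inr j)) :
  ple (Wmor W h sig) (Wmor W k tau) -> iii sig tau R.
Proof.
move=> H.
pose L := @QEmb (quotPO Rr Rt) Z (liftf phi) (liftf_quasi Hq).
have E1 : Wmor W L (Wmor W (@cmapf n P _ R Rr Rt (fun i => inl i) HP) sig) = Wmor W h sig.
  by apply: Wcomp => i; rewrite /= (liftf_qcl Rr Rt resp) Hh.
have E2 : Wmor W L (Wmor W (@cmapf m Q _ R Rr Rt (fun i => inr i) HQ) tau) = Wmor W k tau.
  by apply: Wcomp => i; rewrite /= (liftf_qcl Rr Rt resp) Hk.
apply/iii_canon; exists Rr, Rt, HP, HQ; apply: (@qfun_quasi _ _ (Wmor W L)); by rewrite E1 E2.
Qed.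

Lemma C_gen (Y Z : PO) n m (P : finPO n) (Q : finPO m) (sig : W (PO_of_fin P)) (tau : W (PO_of_fin Q))
  R (phi : 'I_n + 'I_m -> Y) (Hphi : forall u v, R u v <-> ple (phi u) (phi v))
  (psi : 'I_n + 'I_m -> Z) (resp : forall a b, R a b -> R b a -> psi a = psi b)
  (Hq : forall a b, ple (psi a) (psi b) -> R a b)
  (e1 : qemb (PO_of_fin P) Y) (e2 : qemb (PO_of_fin Q) Y)
  (He1 : forall i, e1 i = phi (inl i)) (He2 : forall j, e2 j = phi (inr j))
  (h : qemb (PO_of_fin P) Z) (k : qemb (PO_of_fin Q) Z)
  (Hh : forall i, h i = psi (inl i)) (Hk : forall j, k j = psi (inr j)) :
  Wmor W e1 sig = Wmor W e2 tau -> Wmor W h sig = Wmor W k tau.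
Proof.
move=> H.
have Rr : forall u, R u u by move=> u; apply/Hphi; apply: ple_refl.
have Rt : forall u v w, R u v -> R v w -> R u w.
  move=> u v w /Hphi H1 /Hphi H2; apply/Hphi; exact: ple_trans H1 H2.
have respY : forall a b, R a b -> R b a -> phi a = phi b.
  by move=> a b /Hphi H1 /Hphi H2; apply: ple_antisym.
pose L := @QEmb (quotPO Rr Rt) Y (liftf phi) (liftf_quasi (fun a b H => proj2 (Hphi a b) H)).
have Lemb : embedding L := liftf_emb Hphi.
pose LZ := @QEmb (quotPO Rr Rt) Z (liftf psi) (liftf_quasi Hq).
have HP : forall i j, R (inl i) (inl j) -> frel P i j.
  by move=> i j /Hphi; rewrite -!He1; apply: qfun_quasi.
have HQ : forall i j, R (inr i) (inr j) -> frel Q i j.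
  by move=> i j /Hphi; rewrite -!He2; apply: qfun_quasi.
have E1 : Wmor W L (Wmor W (@cmapf n P _ R Rr Rt (fun i => inl i) HP) sig) = Wmor W e1 sig.
  by apply: Wcomp => i; rewrite /= (liftf_qcl Rr Rt respY) He1.
have E2 : Wmor W L (Wmor W (@cmapf m Q _ R Rr Rt (fun i => inr i) HQ) tau) = Wmor W e2 tau.
  by apply: Wcomp => i; rewrite /= (liftf_qcl Rr Rt respY) He2.
have F1 : Wmor W LZ (Wmor W (@cmapf n P _ R Rr Rt (fun i => inl i) HP) sig) = Wmor W h sig.
  by apply: Wcomp => i; rewrite /= (liftf_qcl Rr Rt resp) Hh.
have F2 : Wmor W LZ (Wmor W (@cmapf m Q _ R Rr Rt (fun i => inr i) HQ) tau) = Wmor W k tau.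
  by apply: Wcomp => i; rewrite /= (liftf_qcl Rr Rt resp) Hk.
rewrite -F1 -F2; congr (Wmor W LZ _).
apply: (emb_inj (Wmor_emb Lemb)); by rewrite E1 E2.
Qed.

Lemma iii_normal (HW : normal W) n m (P : finPO n) (Q : finPO m) (sig : W (PO_of_fin P))
  (tau : W (PO_of_fin Q)) R :
  iii sig tau R -> (forall i, supp W sig i) -> forall i, exists j, R (inl i) (inr j).
Proof.
move=> /iii_canon [Rr [Rt [HP [HQ H]]]] Hs i.
have [|y [Hy Hle]] := HW _ _ _ H (cmapf Rr Rt HP i).
  by apply/supp_nat; exists i.
move/supp_nat: Hy => [j [_ Ej]]; subst y.
exists j; exact/(qle_qcl Rr Rt).
Qed.

End Gen.



Section Ord.
Variables (W : PO_dilator) (X : PO).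
Hypothesis HW : normal W.
Local Notation raw := (raw W X).

Definition DR (D : raw -> Prop) (a b : {r | D r}) := rleq (proj1_sig a) (proj1_sig b).

Definition ED (D : raw -> Prop) (Dr : forall a, @DR D a a)
  (Dt : forall a b c, @DR D a b -> DR b c -> DR a c)
  n (P : finPO n) (c : 'I_n -> raw) (Dc : forall i, D (c i))
  (HP : forall i j, rleq (c i) (c j) -> frel P i j) : qemb (PO_of_fin P) (quotPO Dr Dt) :=
  @QEmb (PO_of_fin P) (quotPO Dr Dt) (fun i => qcl (@DR D) (exist D (c i) (Dc i)))
        (fun i j H => HP i j (proj1 (qle_qcl Dr Dt _ _) H)).

Lemma A_D D Dr Dt n m (P : finPO n) (Q : finPO m) (sig : W (PO_of_fin P)) (tau : W (PO_of_fin Q))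
  (c : 'I_n -> raw) (d : 'I_m -> raw) (Dc : forall i, D (c i)) (Dd : forall j, D (d j)) HP HQ :
  iii sig tau (Rcd c d) <->
  ple (Wmor W (@ED D Dr Dt n P c Dc HP) sig) (Wmor W (@ED D Dr Dt m Q d Dd HQ) tau).
Proof.
apply: (@A_gen W (quotPO Dr Dt) n m P Q sig tau _ (fun u => match u with
                               | inl i => qcl (@DR D) (exist D (c i) (Dc i))
                               | inr j => qcl (@DR D) (exist D (d j) (Dd j)) end)) => //.
move=> u v; rewrite /Rcd; case: u => i; case: v => j; simpl;
  (split; [move=> H; apply/(qle_qcl Dr Dt); exact: H | move/(qle_qcl Dr Dt); exact]).
Qed.

Definition DM M (r : raw) := rwf r /\ rlen r < M.
Definition Refl_upto M := forall s : raw, rwf s -> rlen s < M -> rleq s s.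
Definition Trans_upto M := forall s t r : raw, rwf s -> rwf t -> rwf r ->
  rlen s < M -> rlen t < M -> rlen r < M -> rleq s t -> rleq t r -> rleq s r.

Lemma DM_refl M : Refl_upto M -> forall a : {r | DM M r}, DR a a.
Proof. by move=> H [r [H1 H2]]; apply: H. Qed.

Lemma DM_trans M : Trans_upto M -> forall a b c : {r | DM M r}, DR a b -> DR b c -> DR a c.
Proof. by move=> H [a [a1 a2]] [b [b1 b2]] [c [c1 c2]]; apply: H. Qed.

Lemma child_le (r : raw) m (Q : finPO m) (tau : W (PO_of_fin Q)) (d : 'I_m -> raw) j :
  rwf (rnode tau d) -> rwf r -> rleq (rnode tau d) r -> rleq (d j) r.
Proof.
elim: r => [z|k S rho e IH] wt wr; first by move/rleq_nl.
have /= [Hd [HQ Hs]] := wt.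
have /= [He [HS Hr]] := wr.
move/rleq_nn => [[k' Hk]|H].
- apply: (@le_child W X _ _ _ _ _ k'); exact: IH.
- have [k' Hk] := iii_normal HW H Hs j.
  exact: (@le_child W X _ _ _ _ _ k').
Qed.

Lemma refl_trans M : Refl_upto M /\ Trans_upto M.
Proof.
elim: M => [|M [IHr IHt]]; first by split => ? //; move=> *; lia.
have Dr := DM_refl IHr; have Dt := DM_trans IHt.
have Refl : Refl_upto M.+1.
  move=> [x|n P sig c] Hw Hl; first exact: ple_refl.
  apply/rleq_nn; right.
  have /= [Hc [HP Hs]] := Hw.
  have Dc : forall i, DM M (c i) by move=> i; split => //; have := rlen_child sig c i; lia.
  have HP' : forall i j, rleq (c i) (c j) -> frel P i j by move=> i j /HP.
  apply/(A_D Dr Dt _ _ Dc Dc HP' HP'); exact: ple_refl.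
split => //.
suff: forall N (s t r : raw), rlen s + rlen t + rlen r < N -> rwf s -> rwf t -> rwf r ->
  rlen s < M.+1 -> rlen t < M.+1 -> rlen r < M.+1 -> rleq s t -> rleq t r -> rleq s r.
  by move=> H s t r; apply: H (ltnSn _).
elim=> [|N IHN] s t r HN ws wt wr ls lt lr Hst Htr; first lia.
case: t HN wt lt Hst Htr => [y|m Q tau d] HN wt lt Hst Htr.
- case: s HN ws ls Hst => [x|n P sig c] HN ws ls Hst; last by move/rleq_nl: Hst.
  case: r HN wr lr Htr => [z|k S rho e] HN wr lr Htr.
  + exact: ple_trans Hst Htr.
  + move/rleq_ln: Htr => [k' Hk]; apply/rleq_ln; exists k'.
    have /= [He _] := wr.
    apply: (IHN (rleaf W x) (rleaf W y) (e k')) => //;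
      have := rlen_child rho e k'; move: HN lr; rewrite /=; lia.
- have /= [Hd [HQ Hsd]] := wt.
  have Hch : forall j, rleq (d j) r by move=> j; apply: child_le Htr.
  case: s HN ws ls Hst => [x|n P sig c] HN ws ls Hst.
  + move/rleq_ln: Hst => [j Hj].
    apply: (IHN _ (d j) r) => //;
      have := rlen_child tau d j; move: HN lt; rewrite /=; lia.
  + move/rleq_nn: (Hst) => [[j Hj]|H1].
    * apply: (IHN _ (d j) r) => //;
        have := rlen_child tau d j; move: HN lt; rewrite /=; lia.
    * case: r HN wr lr Htr Hch => [z|k S rho e] HN wr lr Htr Hch; first by move/rleq_nl: Htr.
      have /= [He [HS Hse]] := wr.
      move/rleq_nn: (Htr) => [[k' Hk]|H2].
      -- apply/rleq_nn; left; exists k'.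
         apply: (IHN _ (rnode tau d) (e k')) => //;
           have := rlen_child rho e k'; move: HN lr; rewrite /=; lia.
      -- apply/rleq_nn; right.
         have /= [Hc [HP Hsc]] := ws.
         have Dc : forall i, DM M (c i) by move=> i; split => //; have := rlen_child sig c i; lia.
         have Dd : forall i, DM M (d i) by move=> i; split => //; have := rlen_child tau d i; lia.
         have De : forall i, DM M (e i) by move=> i; split => //; have := rlen_child rho e i; lia.
         have HP' : forall i j, rleq (c i) (c j) -> frel P i j by move=> i j /HP.
         have HQ' : forall i j, rleq (d i) (d j) -> frel Q i j by move=> i j /HQ.
         have HS' : forall i j, rleq (e i) (e j) -> frel S i j by move=> i j /HS.
         move/(A_D Dr Dt _ _ Dc Dd HP' HQ'): H1 => H1.
         move/(A_D Dr Dt _ _ Dd De HQ' HS'): H2 => H2.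
         apply/(A_D Dr Dt _ _ Dc De HP' HS'); exact: ple_trans H1 H2.
Qed.

Lemma rleq_refl (s : raw) : rwf s -> rleq s s.
Proof. move=> w; exact: (proj1 (refl_trans (rlen s).+1) s w (ltnSn _)). Qed.

Lemma rleq_trans (s t r : raw) : rwf s -> rwf t -> rwf r -> rleq s t -> rleq t r -> rleq s r.
Proof.
move=> ws wt wr; apply: (proj2 (refl_trans (rlen s + rlen t + rlen r).+1)) => //; lia.
Qed.

Fixpoint rht (r : raw) : nat :=
  match r with
  | rleaf _ => 0
  | rnode n P s c => (\max_(i < n) rht (c i)).+1
  end.

Lemma rht_child n (P : finPO n) (sig : W (PO_of_fin P)) (c : 'I_n -> raw) i :
  rht (c i) < rht (rnode sig c).
Proof. by rewrite /= ltnS; apply: (leq_bigmax (F := fun i => rht (c i))). Qed.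

Lemma rht_mono (s t : raw) : rwf s -> rwf t -> rleq s t -> rht s <= rht t.
Proof.
suff: forall N (s t : raw), rlen s + rlen t < N -> rwf s -> rwf t -> rleq s t -> rht s <= rht t.
  by move=> H; apply: H (ltnSn _).
elim=> [|N IHN] {}s {}t HN ws wt Hst; first lia.
case: s HN ws Hst => [x|n P sig c] HN ws Hst; first by [].
case: t HN wt Hst => [y|m Q tau d] HN wt Hst; first by move/rleq_nl: Hst.
have /= [Hd [HQ Hsd]] := wt.
have /= [Hc [HP Hsc]] := ws.
move/rleq_nn: Hst => [[j Hj]|H].
- have H1 : rht (rnode sig c) <= rht (d j).
    apply: IHN => //; have := rlen_child tau d j; move: HN; rewrite /=; lia.
  have := rht_child tau d j; move: H1; rewrite /=; lia.
- rewrite /= ltnS; apply/bigmax_leqP => i _.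
  have [j Hj] := iii_normal HW H Hsc i.
  apply: leq_trans (leq_bigmax (F := fun j => rht (d j)) j).
  apply: IHN => //.
  have := rlen_child tau d j; have := rlen_child sig c i; move: HN; rewrite /=; lia.
Qed.

End Ord.



Section Final.
Variables (W : PO_dilator) (X : PO).
Hypothesis HW : normal W.
Local Notation raw := (raw W X).

Definition TWr : forall a : TWA W X, TWR a a := fun a => rleq_refl HW (proj2_sig a).
Definition TWt : forall a b c : TWA W X, TWR a b -> TWR b c -> TWR a c :=
  fun a b c => rleq_trans HW (proj2_sig a) (proj2_sig b) (proj2_sig c).

Local Notation TWo := (TW TWr TWt).

Definition tw (r : raw) (w : rwf r) : TWo := qcl (@TWR W X) (exist _ r w).

Lemma tw_le (r s : raw) (w : rwf r) (w' : rwf s) : ple (tw w) (tw w') <-> rleq r s.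
Proof. exact: (qle_qcl TWr TWt). Qed.

Lemma tw_eq (r s : raw) (w : rwf r) (w' : rwf s) : tw w = tw w' <-> rleq r s /\ rleq s r.
Proof. exact: (qcl_eq TWr TWt). Qed.

Lemma tw_cls (S : TWo) (r : raw) (w : rwf r) : proj1_sig S = cls r -> S = tw w.
Proof. move=> E; exact: in_class_eq. Qed.

Lemma tw_irr (r : raw) (w w' : rwf r) : tw w = tw w'.
Proof. by rewrite (proof_irrelevance _ w w'). Qed.

Lemma io_tw x : iotaTW W x = @tw (rleaf W x) I.
Proof. reflexivity. Qed.

Definition ETW n (P : finPO n) (c : 'I_n -> raw) (Hc : forall i, rwf (c i))
  (HP : forall i j, rleq (c i) (c j) -> frel P i j) : qemb (PO_of_fin P) TWo :=
  @ED W X (@rwf W X) TWr TWt n P c Hc HP.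

Lemma ETW_val n (P : finPO n) c Hc HP i : @ETW n P c Hc HP i = tw (Hc i).
Proof. reflexivity. Qed.

Lemma A_TW n m (P : finPO n) (Q : finPO m) (sig : W (PO_of_fin P)) (tau : W (PO_of_fin Q))
  (c : 'I_n -> raw) (d : 'I_m -> raw) Hc Hd HP HQ :
  iii sig tau (Rcd c d) <->
  ple (Wmor W (@ETW n P c Hc HP) sig) (Wmor W (@ETW m Q d Hd HQ) tau).
Proof. exact: (A_D TWr TWt sig tau Hc Hd HP HQ). Qed.

Lemma wf_node n (P : finPO n) (s : W (PO_of_fin P)) (c : 'I_n -> raw) :
  rwf (rnode s c) -> (forall i, rwf (c i)) /\ (forall i j, rleq (c i) (c j) -> frel P i j) /\
                     (forall i, supp W s i).
Proof. move=> /= [H1 [H2 H3]]; split => //; split => // i j /H2 //. Qed.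

Lemma kappa_exists : exists ka : W TWo -> TWo, forall s, kappaTW_spec s (ka s).
Proof.
suff H : forall s : W TWo, exists S : TWo, kappaTW_spec s S.
  exists (fun s => proj1_sig (constructive_indefinite_description _ (H s))) => s.
  exact: proj2_sig (constructive_indefinite_description _ (H s)).
move=> s.
have [n [g [gi gA]]] := fin_enum (supp_finite s).
pose P := @Build_finPO n (fun i j => ple (g i) (g j)) (fun i => ple_refl _)
            (fun i j k => @ple_trans _ _ _ _)
            (fun i j H1 H2 => gi _ _ (ple_antisym H1 H2)).
pose e := @QEmb (PO_of_fin P) TWo g (fun i j H => H).
have eemb : embedding e by move=> i j.
have [s0 Hs0] := proj2 (supp_rng eemb s) (fun y Hy => proj1 (gA y) Hy).
have Hsupp : forall i, supp W s0 i.
  move=> i; have : supp W s (g i) by apply/gA; exists i.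
  rewrite -Hs0 => /supp_nat [x [Hx Ex]]; by rewrite -(gi _ _ Ex).
pose c i := proj1_sig (rep (g i)).
pose Hc : forall i, rwf (c i) := fun i => proj2_sig (rep (g i)).
have Hg : forall i, g i = tw (Hc i).
  move=> i; rewrite {1}(rep_spec (g i)); congr qcl; rewrite /Hc /c; by case: (rep (g i)).
have wn : rwf (rnode s0 c).
  split => //; split => // i j; rewrite /P /= (Hg i) (Hg j); exact: tw_le.
exists (tw wn); exists n, P, s0, c; split => //.
exists e; split; last by split.
move=> i; rewrite /= Hg //.
Qed.


Lemma fin_le_node (r : raw) (wr : rwf r) m (Q : finPO m) (t0 : W (PO_of_fin Q)) (d : 'I_m -> raw)
  Hd HQ : (forall j, supp W t0 j) ->
  (fin_le (fun z => z = tw wr) (supp W (Wmor W (@ETW m Q d Hd HQ) t0)) <-> exists j, rleq r (d j)).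
Proof.
move=> Hs; split.
- move=> H; have [y [Hy Hle]] := H _ erefl.
  move/supp_nat: Hy => [j [_ Ej]]; subst y.
  exists j; move: Hle; rewrite ETW_val => /tw_le //.
- move=> [j Hj] z ->; exists (ETW Hd HQ j); split; first by apply/supp_nat; exists j.
  rewrite ETW_val; exact/tw_le.
Qed.

Section KA.
Variable ka : W TWo -> TWo.
Hypothesis Hka : forall s, kappaTW_spec s (ka s).

Lemma ka_node (s : W TWo) : exists n (P : finPO n) (s0 : W (PO_of_fin P)) (c : 'I_n -> raw)
   (w : rwf (rnode s0 c)) (Hc : forall i, rwf (c i))
   (HP : forall i j, rleq (c i) (c j) -> frel P i j),
   s = Wmor W (ETW Hc HP) s0 /\ ka s = tw w.
Proof.
have [n [P [s0 [c [w [e [He [Es Ek]]]]]]]] := Hka s.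
have [Hc [HP _]] := wf_node w.
exists n, P, s0, c, w, Hc, HP; split.
- rewrite -Es; congr (Wmor W _ s0); apply: qemb_eq => i; rewrite ETW_val; exact: tw_cls.
- exact: tw_cls.
Qed.

Lemma ka_eq n (P : finPO n) (s0 : W (PO_of_fin P)) (c : 'I_n -> raw) (w : rwf (rnode s0 c))
  Hc HP : ka (Wmor W (@ETW n P c Hc HP) s0) = tw w.
Proof.
have [n' [P' [s0' [c' [w' [Hc' [HP' [Es Ek]]]]]]]] := ka_node (Wmor W (ETW Hc HP) s0).
rewrite Ek; apply/tw_eq; split; apply/rleq_nn; right.
- apply/(A_TW _ _ Hc' Hc HP' HP); rewrite -Es; exact: ple_refl.
- apply/(A_TW _ _ Hc Hc' HP HP'); rewrite -Es; exact: ple_refl.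
Qed.

Lemma KFP_TW : KruskalFP W (@iotaTW W X : X -> TWo) ka.
Proof.
split; [|split; [|split; [|split]]].
- move=> x s; have [n [P [s0 [c [w [Hc [HP [Es Ek]]]]]]]] := ka_node s.
  rewrite Ek io_tw => /tw_eq [_ H]; exact: rleq_nl H.
- by move=> x y; rewrite !io_tw => /tw_le.
- move=> x t; have [n [P [s0 [c [w [Hc [HP [Es Ek]]]]]]]] := ka_node t.
  subst t; rewrite Ek io_tw tw_le rleq_ln fin_le_node //.
  by have /= [_ [_ ?]] := w.
- move=> s y; have [n [P [s0 [c [w [Hc [HP [Es Ek]]]]]]]] := ka_node s.
  rewrite Ek io_tw => /tw_le; exact: rleq_nl.
- move=> s t; have [n [P [s0 [c [w [Hc [HP [Es Ek]]]]]]]] := ka_node s.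
  have [m [Q [t0 [d [w' [Hd [HQ [Et Ekt]]]]]]]] := ka_node t.
  rewrite Ek Ekt tw_le rleq_nn (A_TW _ _ Hc Hd HP HQ) Et fin_le_node -?Es //.
  + split=> [[H|H]|[H|H]]; by [left | right].
  + by have /= [_ [_ ?]] := w'.
Qed.

End KA.
End Final.



Lemma nq_inh n (P : finPO n) (Z : PO) (h : 'I_n -> Z) :
  ~ @quasi_emb (PO_of_fin P) Z h -> inhabited Z.
Proof.
case: n P h => [|n] P h H; last exact: inhabits (h ord0).
exfalso; apply: H; by case.
Qed.

Section Init.
Variables (W : PO_dilator) (X : PO).
Hypothesis HW : normal W.
Local Notation raw := (raw W X).
Local Notation TWo := (TW (TWr HW) (TWt HW)).

Variables (Z : PO) (io' : X -> Z) (ka' : W Z -> Z).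
Hypothesis HK : KruskalFP W io' ka'.

Fixpoint F (r : raw) : Z :=
  match r with
  | rleaf x => io' x
  | rnode n P s c =>
    match excluded_middle_informative (@quasi_emb (PO_of_fin P) Z (fun i => F (c i))) with
    | left H => ka' (Wmor W (@QEmb (PO_of_fin P) Z (fun i => F (c i)) H) s)
    | right H => epsilon (nq_inh H) (fun _ => True)
    end
  end.

Lemma F_node n (P : finPO n) (s : W (PO_of_fin P)) (c : 'I_n -> raw)
  (H : @quasi_emb (PO_of_fin P) Z (fun i => F (c i))) :
  F (rnode s c) = ka' (Wmor W (@QEmb _ _ _ H) s).
Proof.
rewrite /=; case: excluded_middle_informative => [H'|nH] //.
by rewrite (proof_irrelevance _ H H').
Qed.

Lemma FQE N : forall s t : raw, rlen s + rlen t < N -> rwf s -> rwf t ->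
   (ple (F s) (F t) -> rleq s t) /\ (rleq s t -> rleq t s -> F s = F t).
Proof.
have [K1 [K2 [K3 [K4 K5]]]] := HK.
elim: N => [|N IHN] s t HN ws wt; first lia.
case: s HN ws => [x|n P sig c] HN ws; case: t HN wt => [y|m Q tau d] HN wt.
- split; first exact: K2.
  move=> /rleq_ll H1 /rleq_ll H2; by rewrite /= (ple_antisym H1 H2).
- have [Hd [HQ Hsd]] := wf_node wt.
  have hq : @quasi_emb (PO_of_fin Q) Z (fun j => F (d j)).
    move=> i j H; apply: HQ; apply: (proj1 (IHN (d i) (d j) _ (Hd i) (Hd j))) => //.
    have := rlen_child tau d i; have := rlen_child tau d j; move: HN; rewrite /=; lia.
  rewrite (F_node tau hq); split; last by move=> _ /rleq_nl.
  move/K3 => H; have [z [Hz Hle]] := H _ erefl.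
  move/supp_nat: Hz => [j [_ Ej]]; subst z.
  apply/rleq_ln; exists j; apply: (proj1 (IHN (rleaf W x) (d j) _ I (Hd j))) => //.
  have := rlen_child tau d j; move: HN; rewrite /=; lia.
- have [Hc [HP Hsc]] := wf_node ws.
  have hc : @quasi_emb (PO_of_fin P) Z (fun j => F (c j)).
    move=> i j H; apply: HP; apply: (proj1 (IHN (c i) (c j) _ (Hc i) (Hc j))) => //.
    have := rlen_child sig c i; have := rlen_child sig c j; move: HN; rewrite /=; lia.
  rewrite (F_node sig hc); split; last by move/rleq_nl.
  move=> H; exfalso; exact: K4 H.
- have [Hc [HP Hsc]] := wf_node ws; have [Hd [HQ Hsd]] := wf_node wt.
  have wv : forall u, rwf (rval c d u) by case.
  have IHp : forall u v,
      (ple (F (rval c d u)) (F (rval c d v)) -> rleq (rval c d u) (rval c d v)) /\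
      (rleq (rval c d u) (rval c d v) -> rleq (rval c d v) (rval c d u) ->
       F (rval c d u) = F (rval c d v)).
    move=> u v; apply: IHN => //; have := rval_len sig tau c d u v; lia.
  have hc : @quasi_emb (PO_of_fin P) Z (fun j => F (c j)).
    move=> i j H; apply: HP; exact: (proj1 (IHp (inl i) (inl j)) H).
  have hd : @quasi_emb (PO_of_fin Q) Z (fun j => F (d j)).
    move=> i j H; apply: HQ; exact: (proj1 (IHp (inr i) (inr j)) H).
  have Rr : forall u, Rcd c d u u by move=> u; exact (rleq_refl HW (wv u)).
  have Rt : forall u v w, Rcd c d u v -> Rcd c d v w -> Rcd c d u w.
    by move=> u v w; exact (rleq_trans HW (wv u) (wv v) (wv w)).
  have resp : forall a b, Rcd c d a b -> Rcd c d b a -> F (rval c d a) = F (rval c d b).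
    by move=> a b; exact: (proj2 (IHp a b)).
  have Hq : forall a b, ple (F (rval c d a)) (F (rval c d b)) -> Rcd c d a b.
    by move=> a b; exact: (proj1 (IHp a b)).
  rewrite (F_node sig hc) (F_node tau hd); split.
  + move/K5 => [H|H].
    * apply/rleq_nn; right.
      exact: (@B_gen W Z n m P Q sig tau (Rcd c d) Rr Rt (fun u => F (rval c d u)) resp Hq
                (fun i j H => HP i j H) (fun i j H => HQ i j H) (QEmb hc) (QEmb hd)
                (fun _ => erefl) (fun _ => erefl) H).
    * have [z [Hz Hle]] := H _ erefl; move/supp_nat: Hz => [j [_ Ej]]; subst z.
      apply: (@le_child W X _ _ _ tau d j).
      rewrite -(F_node sig hc) in Hle.
      apply: (proj1 (IHN _ (d j) _ ws (Hd j))) => //.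
      have := rlen_child tau d j; move: HN; rewrite /=; lia.
  + move=> Hst Hts.
    move/rleq_nn: (Hst) => [[j Hj]|H1].
      have := rht_mono HW wt ws Hts; have := rht_mono HW ws (Hd j) Hj.
      have := rht_child tau d j; lia.
    move/rleq_nn: (Hts) => [[j Hj]|H2].
      have := rht_mono HW ws wt Hst; have := rht_mono HW wt (Hc j) Hj.
      have := rht_child sig c j; lia.
    move/(A_TW HW _ _ Hc Hd HP HQ): H1 => H1.
    move/(A_TW HW _ _ Hd Hc HQ HP): H2 => H2.
    have Eq := ple_antisym H1 H2.
    have Hphi : forall u v, Rcd c d u v <-> ple (tw HW (wv u)) (tw HW (wv v)).
      by move=> u v; rewrite tw_le.
    congr ka'.
    apply: (@C_gen W TWo Z n m P Q sig tau (Rcd c d) (fun u => tw HW (wv u)) Hphi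
              (fun u => F (rval c d u)) resp Hq (ETW HW Hc HP) (ETW HW Hd HQ) _ _
              (QEmb hc) (QEmb hd) (fun _ => erefl) (fun _ => erefl) Eq).
    * move=> i; rewrite ETW_val; exact: tw_irr.
    * move=> i; rewrite ETW_val; exact: tw_irr.
Qed.

Lemma F_quasi (s t : raw) : rwf s -> rwf t -> ple (F s) (F t) -> rleq s t.
Proof. move=> ws wt; exact: (proj1 (@FQE (rlen s + rlen t).+1 s t (ltnSn _) ws wt)). Qed.

Lemma F_resp (s t : raw) : rwf s -> rwf t -> rleq s t -> rleq t s -> F s = F t.
Proof. move=> ws wt; exact: (proj2 (@FQE (rlen s + rlen t).+1 s t (ltnSn _) ws wt)). Qed.

Definition f (S : TWo) : Z := F (proj1_sig (rep S)).

Lemma f_tw (r : raw) (w : rwf r) : f (tw HW w) = F r.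
Proof.
have := rep_spec (tw HW w); rewrite /f; case: (rep (tw HW w)) => r' w' E /=.
have /tw_eq [H1 H2] : tw HW w = tw HW w' by exact: E.
by apply: F_resp.
Qed.

Lemma f_quasi : @quasi_emb TWo Z f.
Proof.
move=> S T H; rewrite (rep_spec S) (rep_spec T); move: H; rewrite /f.
case: (rep S) => r w; case: (rep T) => r' w' /= H.
exact (proj2 (tw_le HW w w') (F_quasi w w' H)).
Qed.

Definition fq : qemb TWo Z := QEmb f_quasi.

Lemma f_io x : fq (iotaTW W x) = io' x.
Proof. by rewrite /= io_tw f_tw. Qed.

Lemma f_ka ka (Hka : forall s, kappaTW_spec s (ka s)) (s : W TWo) : fq (ka s) = ka' (Wmor W fq s).
Proof.
have [n [P [s0 [c [w [Hc [HP [Es Ek]]]]]]]] := ka_node Hka s.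
rewrite /= Ek f_tw Es.
have hc : @quasi_emb (PO_of_fin P) Z (fun j => F (c j)).
  move=> i j H; exact (HP i j (F_quasi (Hc i) (Hc j) H)).
rewrite (F_node s0 hc); congr ka'; symmetry; apply: Wcomp => i /=.
exact: (f_tw (Hc i)).
Qed.

Lemma f_uniq ka (Hka : forall s, kappaTW_spec s (ka s)) (g : qemb TWo Z) :
  (forall x, g (iotaTW W x) = io' x) -> (forall s, g (ka s) = ka' (Wmor W g s)) ->
  forall z, g z = fq z.
Proof.
move=> Hio Hg.
have key : forall (r : raw) (w : rwf r), g (tw HW w) = F r.
  elim=> [x|n P s0 c IH] w.
  - by rewrite (tw_irr HW w I) -io_tw Hio.
  - have [Hc [HP _]] := wf_node w.
    rewrite -(ka_eq Hka w Hc HP) Hg.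
    have hc : @quasi_emb (PO_of_fin P) Z (fun j => F (c j)).
      move=> i j H; exact (HP i j (F_quasi (Hc i) (Hc j) H)).
    rewrite (F_node s0 hc); congr ka'; apply: Wcomp => i /=.
    exact: (IH i (Hc i)).
move=> z; rewrite /= /f {1}(rep_spec z); case: (rep z) => r w /=.
exact: key.
Qed.

End Init.

Lemma init_TW (W : PO_dilator) (HW : normal W) (X : PO) (ka : W (TW (TWr HW) (TWt HW)) -> TW (TWr HW) (TWt HW))
  (Hka : forall s, kappaTW_spec s (ka s)) :
  KruskalFP_initial W (@iotaTW W X : X -> TW (TWr HW) (TWt HW)) ka.
Proof.
move=> Z io' ka' HK; exists (fq HW HK); split.
- split; [exact: f_io | exact: f_ka Hka].
- exact: f_uniq Hka.
Qed.

Theorem corollary3p6 (W : PO_dilator) (HW : normal W) (X : PO) :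
  exists (Hr : forall a : TWA W X, TWR a a)
         (Ht : forall a b c : TWA W X, TWR a b -> TWR b c -> TWR a c),
    (exists ka : W (TW Hr Ht) -> TW Hr Ht, forall s, kappaTW_spec s (ka s)) /\
    (forall ka : W (TW Hr Ht) -> TW Hr Ht,
        (forall s, kappaTW_spec s (ka s)) ->
        KruskalFP W (@iotaTW W X : X -> TW Hr Ht) ka /\
        KruskalFP_initial W (@iotaTW W X : X -> TW Hr Ht) ka).
Proof.
exists (TWr HW), (TWt HW); split; first exact: kappa_exists.
move=> ka Hka; split; [exact: KFP_TW | exact: init_TW].
Qed.
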